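(* Let $A$ be a set and let $\mathcal{E}$ be a set of subsets of $A$ such that (C1) for every $K\subseteq A$, $K\in\mathcal{E}$ if and only if $A\setminus K\notin\mathcal{E}$; and (C2) if $K\in\mathcal{E}$ and $K\subseteq L\subseteq A$, then $L\in\mathcal{E}$. Suppose each member of $A$ chooses one of the six strict total orders on three candidates $a,b,c$, labelled by $\mathbb{Z}/6\mathbb{Z}$ as: $1: a>b>c$, $2: a>c>b$, $3: c>a>b$, $4: c>b>a$, $5: b>c>a$, $6: b>a>c$. For $p\in\mathbb{Z}/6\mathbb{Z}$ let $K(p)$ be the set of members who chose ranking $p$, and $K(p,q,r)=K(p)\cup K(q)\cup K(r)$. Define the collective preference by: for distinct candidates $x,y$, $x$ is collectively preferred to $y$ iff the set of members who rank $x$ above $y$ belongs to $\mathcal{E}$. If (V) there exists $p$ such that $K(p,p+1,p+2)\in\mathcal{E}$ and $K(p+1,p+2,p+3)\in\mathcal{E}$, then the collective preference is a strict total order on $\{a,b,c\}$.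
   Context: Indices are taken modulo $6$. By (C1), for each pair of distinct candidates exactly one of the two collective preferences holds. *)

(* Defs.v *)
From Stdlib Require Import Arith.

Inductive cand : Type := ca | cb | cc.

(* position (0 = top) of candidate x in ranking with label r (taken mod 6).
   Labels: 1: a>b>c, 2: a>c>b, 3: c>a>b, 4: c>b>a, 5: b>c>a, 6 (= 0 mod 6): b>a>c. *)
Definition pos (r : nat) (x : cand) : nat :=
  match r mod 6, x with
  | 1, ca => 0 | 1, cb => 1 | 1, cc => 2
  | 2, ca => 0 | 2, cc => 1 | 2, cb => 2
  | 3, cc => 0 | 3, ca => 1 | 3, cb => 2
  | 4, cc => 0 | 4, cb => 1 | 4, ca => 2
  | 5, cb => 0 | 5, cc => 1 | 5, ca => 2
  | _, cb => 0 | _, ca => 1 | _, cc => 2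
  end.

Definition ranks_above (r : nat) (x y : cand) : Prop := pos r x < pos r y.

Definition K {A : Type} (prof : A -> nat) (p : nat) : A -> Prop :=
  fun i => prof i mod 6 = p mod 6.

Definition K3 {A : Type} (prof : A -> nat) (p q r : nat) : A -> Prop :=
  fun i => K prof p i \/ K prof q i \/ K prof r i.

Definition collective_pref {A : Type} (E : (A -> Prop) -> Prop)
  (prof : A -> nat) (x y : cand) : Prop :=
  x <> y /\ E (fun i => ranks_above (prof i) x y).

Definition strict_total_order {T : Type} (R : T -> T -> Prop) : Prop :=
  (forall x, ~ R x x) /\
  (forall x y z, R x y -> R y z -> R x z) /\
  (forall x y, x <> y -> R x y \/ R y x).

(* Main.v *)
Require Import Defs.
From Stdlib Require Import Arith Lia Classical.

Lemma pos_mod r x : pos r x = pos (r mod 6) x.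
Proof. unfold pos. rewrite Nat.Div0.mod_mod. reflexivity. Qed.

Lemma ra_mod r x y : ranks_above r x y -> ranks_above (r mod 6) x y.
Proof. unfold ranks_above. rewrite (pos_mod r x), (pos_mod r y). auto. Qed.

Lemma tot r x y : x <> y -> ~ ranks_above r x y -> ranks_above r y x.
Proof.
  intros H1 H2. unfold ranks_above, pos in *.
  destruct (r mod 6) as [|[|[|[|[|[|]]]]]]; destruct x, y; try congruence; lia.
Qed.

Lemma K3_mod {A} (prof : A -> nat) p k i :
  K3 prof (p + k) (p + k + 1) (p + k + 2) i ->
  prof i mod 6 = (p mod 6 + k) mod 6 \/ prof i mod 6 = (p mod 6 + k + 1) mod 6
  \/ prof i mod 6 = (p mod 6 + k + 2) mod 6.
Proof.
  unfold K3, K.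
  rewrite <- !Nat.add_assoc, !(Nat.Div0.add_mod_idemp_l p). auto.
Qed.

Lemma disj {A} (E : (A -> Prop) -> Prop)
  (C1 : forall K : A -> Prop, E K <-> ~ E (fun i => ~ K i))
  (C2 : forall K L : A -> Prop, E K -> (forall i, K i -> L i) -> E L) K L :
  E K -> E L -> (forall i, K i -> L i -> False) -> False.
Proof.
  intros HK HL D. apply (proj1 (C1 K) HK). apply (C2 L); auto.
  intros i h h'. exact (D i h' h).
Qed.

Ltac solve_pair C1 C2 Eq Ha Hb :=
  exfalso; apply (disj _ C1 C2 _ _ Ha Hb); intros i h1 h2;
  first [apply ra_mod in h1 | apply (K3_mod _ _ 0) in h1 | apply (K3_mod _ _ 1) in h1];
  first [apply ra_mod in h2 | apply (K3_mod _ _ 0) in h2 | apply (K3_mod _ _ 1) in h2];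
  try rewrite <- Eq in h1; try rewrite <- Eq in h2;
  match type of h1 with context [?f i mod 6] =>
  assert (Hm : f i mod 6 < 6) by (apply Nat.mod_upper_bound; lia);
  revert h1 h2 Hm; generalize (f i mod 6); intros mm; intros;
  destruct mm as [|[|[|[|[|[|mm]]]]]] end; unfold ranks_above, pos in *; simpl in *; lia.

Theorem mainTheorem3 (A : Type) (E : (A -> Prop) -> Prop) (prof : A -> nat)
  (C1 : forall K : A -> Prop, E K <-> ~ E (fun i => ~ K i))
  (C2 : forall K L : A -> Prop, E K -> (forall i, K i -> L i) -> E L)
  (V : exists p : nat, E (K3 prof p (p + 1) (p + 2)) /\
                       E (K3 prof (p + 1) (p + 2) (p + 3))) :
  strict_total_order (collective_pref E prof).
Proof.
  assert (Tot : forall x y, x <> y -> collective_pref E prof x y \/ collective_pref E prof y x).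
  { intros x y Hxy. unfold collective_pref.
    destruct (classic (E (fun i => ranks_above (prof i) x y))) as [H|H]; [left; auto|right].
    split; [auto|].
    assert (H' : E (fun i => ~ ranks_above (prof i) x y)).
    { apply NNPP; intro H'; apply H; apply C1; exact H'. }
    apply (C2 _ _ H'). intros i h. apply tot; auto. }
  split; [|split].
  - intros x [H _]. auto.
  - intros x y z [Hxy H1] [Hyz H2].
    assert (Hxz : x <> z).
    { intro e; subst z. apply (disj _ C1 C2 _ _ H1 H2). intros i h h'.
      unfold ranks_above in *. lia. }
    destruct (Tot x z Hxz) as [R|[_ H3]]; [exact R|exfalso].
    destruct V as [p [T1 T2]].
    replace (K3 prof p (p + 1) (p + 2)) with (K3 prof (p + 0) (p + 0 + 1) (p + 0 + 2)) in T1
      by (f_equal; lia).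
    replace (K3 prof (p + 1) (p + 2) (p + 3)) with (K3 prof (p + 1) (p + 1 + 1) (p + 1 + 2)) in T2
      by (f_equal; lia).
    assert (Hq : p mod 6 < 6) by (apply Nat.mod_upper_bound; lia).
    revert T1 T2 Hq. generalize p. intros p0 T1 T2 Hq.
    assert (Hq' : exists q, q = p0 mod 6) by eauto. destruct Hq' as [q Eq].
    destruct x, y, z; try congruence;
    destruct q as [|[|[|[|[|[|q]]]]]]; try lia;
    first [ solve_pair C1 C2 Eq H1 H2 | solve_pair C1 C2 Eq H1 H3 | solve_pair C1 C2 Eq H2 H3
          | solve_pair C1 C2 Eq H1 T1 | solve_pair C1 C2 Eq H1 T2 | solve_pair C1 C2 Eq H2 T1
          | solve_pair C1 C2 Eq H2 T2 | solve_pair C1 C2 Eq H3 T1 | solve_pair C1 C2 Eq H3 T2 ].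
  - exact Tot.
Qed.
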